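(* Let $U\subset\mathbb{R}^d$ be a $k$-dimensional linear subspace, let $P=\{p_1,\dots,p_n\}\subset U$, and let $\alpha>0$. Let $\tilde P=\{\tilde p_i=p_i+t_i\}$, where $t_i\in\mathbb{R}^d$ are arbitrary vectors with $\|t_i\|\le\alpha$. Run the following procedure. Set $j\gets0$ and $\tilde P_0\gets\tilde P$. While $\tilde P_j\neq\emptyset$: - let $\tilde U_j$ be the $k$-dimensional PCA subspace of $\tilde P_j$; - let $M_j=\{\tilde p\in\tilde P_j : \mathrm{dist}(\tilde p,\tilde U_j)\le\sqrt2\,\alpha\}$; - set $\tilde P_{j+1}\gets\tilde P_j\setminus M_j$ and $j\gets j+1$. Then this procedure terminates within $O(\log n)$ iterations.
   Context: For a finite point set $S\subset\mathbb{R}^d$, a $k$-dimensional PCA subspace of $S$ is a $k$-dimensional linear subspace $W$ minimizing $\sum_{x\in S}\mathrm{dist}(x,W)^2$ among all $k$-dimensional linear subspaces; ties are broken arbitrarily. Here $\mathrm{dist}(x,W)=\inf_{y\in W}\|x-y\|$ is the Euclidean distance. *)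

(* Defs.v *)
From HB Require Import structures.
From mathcomp Require Import all_boot all_order all_algebra.
From mathcomp Require Import finmap.
From mathcomp Require Import reals.
Set Implicit Arguments. Unset Strict Implicit. Unset Printing Implicit Defensive.
Import Order.TTheory GRing.Theory Num.Theory.
Local Open Scope ring_scope.
Local Open Scope fset_scope.

Section PCA.
Variables (R : realType) (d : nat).

Definition enorm (x : 'rV[R]_d) : R := Num.sqrt (\sum_(i < d) x ord0 i ^+ 2).

Definition dist (x : 'rV[R]_d) (W : {vspace 'rV[R]_d}) : R :=
  inf (fun r : R => exists y, y \in W /\ r = enorm (x - y)).

Definition pca_cost (S : {fset 'rV[R]_d}) (W : {vspace 'rV[R]_d}) : R :=
  \sum_(x <- S) dist x W ^+ 2.

Definition is_pca (k : nat) (S : {fset 'rV[R]_d}) (W : {vspace 'rV[R]_d}) : Prop :=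
  \dim W = k /\ forall W' : {vspace 'rV[R]_d}, \dim W' = k -> pca_cost S W <= pca_cost S W'.

(* One run of the procedure (ties in the PCA choice broken arbitrarily):
   S j is \tilde P_j, W j is \tilde U_j. *)
Definition pca_run (k : nat) (alpha : R) (P0 : {fset 'rV[R]_d})
    (S : nat -> {fset 'rV[R]_d}) (W : nat -> {vspace 'rV[R]_d}) : Prop :=
  S 0%N = P0 /\
  forall j : nat, S j != fset0 ->
    is_pca k (S j) (W j) /\
    S j.+1 = [fset x in S j | ~~ (dist x (W j) <= Num.sqrt 2 * alpha)].

End PCA.

(* Main.v *)
Require Import Defs.
From HB Require Import structures.
From mathcomp Require Import all_boot all_order all_algebra.
From mathcomp Require Import finmap.
From mathcomp Require Import reals.
From mathcomp Require Import classical_sets.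
From mathcomp Require Import lra.
Import Order.TTheory GRing.Theory Num.Theory.
Local Open Scope ring_scope.
Local Open Scope fset_scope.

Section Aux.
Variables (R : realType) (d : nat).

Lemma enorm_ge0 (x : 'rV[R]_d) : 0 <= enorm x.
Proof. exact: sqrtr_ge0. Qed.

Lemma dist_ge0 (x : 'rV[R]_d) (W : {vspace 'rV[R]_d}) : 0 <= dist x W.
Proof.
apply: lb_le_inf.
  by exists (enorm (x - 0)); exists 0; split => //; exact: mem0v.
by move=> r [y [_ ->]]; exact: enorm_ge0.
Qed.

Lemma dist_le (x y : 'rV[R]_d) (W : {vspace 'rV[R]_d}) : y \in W -> dist x W <= enorm (x - y).
Proof.
move=> yW; apply: ge_inf; last by exists y.
by exists 0 => r [z [_ ->]]; exact: enorm_ge0.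
Qed.

Lemma sum_const_fset (A : {fset 'rV[R]_d}) (c : R) :
  \sum_(x <- A) c = (#|` A|)%:R * c.
Proof.
rewrite card_fset_sum1 natr_sum mulr_suml.
by apply: eq_bigr => i _; rewrite mul1r.
Qed.

Lemma step (k : nat) (U W : {vspace 'rV[R]_d}) (S : {fset 'rV[R]_d}) (alpha : R) :
  0 < alpha -> \dim U = k -> is_pca k S W ->
  (forall x, x \in S -> dist x U <= alpha) ->
  (2 * #|` [fset x in S | ~~ (dist x W <= Num.sqrt 2 * alpha)%R]| <= #|` S|)%N.
Proof.
move=> a0 dU [_ pca] hS.
set S' := [fset x in S | _].
have sub : S' `<=` S by apply/fsubsetP => x; rewrite inE => /andP[].
have h1 := pca U dU.
have h2 : pca_cost S U <= (#|` S|)%:R * alpha ^+ 2.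
  rewrite /pca_cost -sum_const_fset big_seq [X in _ <= X]big_seq.
  apply: ler_sum => x xS.
  rewrite !expr2; apply: ler_pM; [exact: dist_ge0|exact: dist_ge0|exact: hS|exact: hS].
pose F x := if x \in S' then dist x W ^+ 2 else 0.
have h3 : \sum_(x <- S') dist x W ^+ 2 <= pca_cost S W.
  rewrite (eq_big_seq F); last by move=> x xS; rewrite /F xS.
  rewrite (big_fset_incl _ sub); last by move=> x _ /negbTE; rewrite /F => ->.
  apply: ler_sum => x _; rewrite /F; case: ifP => // _.
  exact: sqr_ge0.
have h4 : (#|` S'|)%:R * (2 * alpha ^+ 2) <= \sum_(x <- S') dist x W ^+ 2.
  rewrite -sum_const_fset big_seq [X in _ <= X]big_seq.
  apply: ler_sum => x; rewrite inE => /andP[_]; rewrite -ltNge => lt.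
  have s2 : Num.sqrt (2:R) ^+ 2 = 2 by rewrite sqr_sqrtr.
  have s0 : 0 <= Num.sqrt (2:R) by exact: sqrtr_ge0.
  have e : 2 * alpha ^+ 2 = (Num.sqrt 2 * alpha) ^+ 2 by rewrite exprMn s2.
  rewrite e !expr2; apply: ler_pM; try exact: ltW.
    by apply: mulr_ge0 => //; exact: ltW.
  by apply: mulr_ge0 => //; exact: ltW.
have : (#|` S'|)%:R * (2 * alpha ^+ 2) <= (#|` S|)%:R * alpha ^+ 2.
  by apply: le_trans h4 _; apply: le_trans h3 _; apply: le_trans h1 h2.
rewrite mulrA -(ler_nat R) natrM.
have a2 : 0 < alpha ^+ 2 by exact: exprn_gt0.
by rewrite ler_pM2r // mulrC.
Qed.

End Aux.

Theorem claim3p3 :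
  exists C : nat,
  forall (R : realType) (d k n : nat) (U : {vspace 'rV[R]_d})
         (p t : 'I_n -> 'rV[R]_d) (alpha : R),
    \dim U = k ->
    injective p ->
    (forall i, p i \in U) ->
    0 < alpha ->
    (forall i, enorm (t i) <= alpha) ->
    forall (S : nat -> {fset 'rV[R]_d}) (W : nat -> {vspace 'rV[R]_d}),
      pca_run k alpha [fset (p i + t i)%R | i : 'I_n] S W ->
      exists m : nat, (m <= C * (trunc_log 2 n).+1)%N /\ S m = fset0.
Proof.
exists 1%N => R d k n U p t alpha dU _ pU a0 ht S W [S0 run].
set P0 := [fset _ | _ : 'I_n] in S0.
have cP0 : (#|` P0| <= n)%N.
  by apply: leq_trans (leq_imfset_card _ _ _) _; rewrite /= size_enum_ord.
have dP0 : forall x, x \in P0 -> dist x U <= alpha.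
  move=> x /imfsetP [i _ ->].
  apply: le_trans (@dist_le _ _ _ _ _ (pU i)) _.
  by rewrite addrC addKr.
have inv : forall j, (exists m, (m <= j)%N /\ S m = fset0) \/
    (S j `<=` P0 /\ (#|` S j| * 2 ^ j <= n)%N).
  elim => [|j [[m [mj Sm]]|[sj cj]]].
  - by right; rewrite S0 expn0 muln1; split.
  - by left; exists m; split => //; exact: leqW.
  - have [Sj0|Sjn] := eqVneq (S j) fset0; first by left; exists j.
    have [pca Sj1] := run j Sjn.
    have c2 := @step R d k U (W j) (S j) alpha a0 dU pca (fun x xS => dP0 x (fsubsetP sj x xS)).
    right; rewrite Sj1; split.
      by apply: fsubset_trans sj; apply/fsubsetP => x; rewrite inE => /andP[].
    apply: (leq_trans _ cj).
    by rewrite expnS mulnCA mulnA leq_mul2r c2 orbT.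
have [[m [mj Sm]]|[_ c]] := inv (trunc_log 2 n).+1.
  by exists m; rewrite mul1n.
exists (trunc_log 2 n).+1; rewrite mul1n; split => //.
apply: cardfs0_eq.
have lt := trunc_log_ltn n (isT : (1 < 2)%N).
case: (#|` _|) c => // s c.
by move: (leq_ltn_trans c lt); rewrite mulSn ltnNge leq_addr.
Qed.
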